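(* Let $\theta\in\mathbb{R}$ with $\sin\theta\neq 0$, and put $c=\cos\theta$, $s=\sin\theta$. Let $\mathcal{H}$ be a $3$-dimensional complex Hilbert space with orthonormal basis $\{|E\rangle,|\tau_0\rangle,|\tau_1\rangle\}$, and let $U$ be a unitary operator on $\mathcal{H}$ satisfying the four conditions $$\langle E|U|\tau_0\rangle=0,\qquad c\,\langle E|U|E\rangle+s\,\langle E|U|\tau_1\rangle=0,$$ $$\langle \tau_0|U|\tau_1\rangle=0,\qquad c\,\langle \tau_0|U|E\rangle+s\,\langle \tau_0|U|\tau_0\rangle=0 .$$ Define $P^{(0)}_{\mathrm{cf}}:=|c\,\langle E|U|E\rangle|^2$ and $P^{(1)}_{\mathrm{cf}}:=|c\,\langle \tau_0|U|E\rangle|^2$. Then there is no such unitary $U$ for which both $P^{(0)}_{\mathrm{cf}}>0$ and $P^{(1)}_{\mathrm{cf}}>0$.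
   Context: Physical interpretation (not needed for the mathematics): this is a ''counterfactual clock'' with two distinguishable times $\tau_0,\tau_1$ and no ancilla states. Initially the state is $|E\rangle$; a unitary maps it to $c|E\rangle+s|\psi\rangle$, the clock dynamics $U(t)$ fixes $|E\rangle$ and maps $|\psi\rangle$ to $|\tau_j\rangle$ at time $\tau_j$, then $U$ is applied and one measures. The four displayed conditions are the requirements that outcome $E$ can only arise from the stationary branch and certifies elapsed time $\tau_0$, and that outcome $\tau_0$ can only arise from the stationary branch and certifies elapsed time $\tau_1$; $P^{(0)}_{\mathrm{cf}}$ and $P^{(1)}_{\mathrm{cf}}$ are the probabilities of these two counterfactual outcomes. *)

(* Defs.v *)
From mathcomp Require Import all_boot all_order all_algebra.
From mathcomp Require Import complex.
From mathcomp Require Import all_classical all_reals all_analysis.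
Set Implicit Arguments. Unset Strict Implicit. Unset Printing Implicit Defensive.
Import Order.TTheory GRing.Theory Num.Theory.
Local Open Scope ring_scope.

(* Basis indices of the 3-dimensional Hilbert space C^3:
   |E> = e_0, |tau_0> = e_1, |tau_1> = e_2 ;  <a|U|b> = U a b. *)
Definition iE : 'I_3 := @Ordinal 3 0 isT.
Definition itau0 : 'I_3 := @Ordinal 3 1 isT.
Definition itau1 : 'I_3 := @Ordinal 3 2 isT.

(* Main.v *)
Require Import Defs.
From mathcomp Require Import all_boot all_order all_algebra.
From mathcomp Require Import complex.
From mathcomp Require Import all_classical all_reals all_analysis.
Import Order.TTheory GRing.Theory Num.Theory.
Local Open Scope ring_scope.
Local Open Scope complex_scope.

Theorem proposition1 (R : realType) (theta : R) (U : 'M[R[i]]_3) :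
  sin theta != 0 ->
  U \is unitarymx ->
  U iE itau0 = 0 ->
  (cos theta)%:C * U iE iE + (sin theta)%:C * U iE itau1 = 0 ->
  U itau0 itau1 = 0 ->
  (cos theta)%:C * U itau0 iE + (sin theta)%:C * U itau0 itau0 = 0 ->
  ~ (0 < `|(cos theta)%:C * U iE iE| ^+ 2 /\
     0 < `|(cos theta)%:C * U itau0 iE| ^+ 2).
Proof.
move=> _ /unitarymxP HU h1 _ h3 _ [Ha Hd].
have := congr1 (fun M : 'M[R[i]]_3 => M iE itau0) HU.
rewrite !mxE big_ord_recr big_ord_recr big_ord_recr big_ord0 /= !mxE.
have -> : (widen_ord (leqnSn 2) (widen_ord (leqnSn 1) ord_max)) = iE by apply/val_inj.
have -> : (widen_ord (leqnSn 2) (@ord_max 1)) = itau0 by apply/val_inj.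
have -> : (@ord_max 2) = itau1 by apply/val_inj.
rewrite h1 h3 /=.
rewrite conjC0 !mul0r mulr0 !addr0 add0r => /eqP.
rewrite mulf_eq0 conjC_eq0 => /orP [] /eqP H.
  by move: Ha; rewrite H mulr0 normr0 expr0n ltxx.
by move: Hd; rewrite H mulr0 normr0 expr0n ltxx.
Qed.
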